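(* Let $\mathrm r\in\mathbb{Z}_+^d$ with $\mathrm r>0$, let $x\in S_d^{\mathrm r}$ with finite length, and let $\bar x$ be the associated sequence (which lies in $\bar S_d^{\mathrm r}$). Then the number of good cyclical permutations of $x$ (with respect to $\mathrm r$) equals the number of good cyclical permutations of $\bar x$ (with respect to $\mathrm r$).
   Context: $d\ge2$, $[d]=\{1,\dots,d\}$, $\mathbb N=\{1,2,\dots\}$, $1_d=(1,\dots,1)$. $S_d$: families $x=(x^{(1)},\dots,x^{(d)})$, $x^{(i)}=(x^{i,1},\dots,x^{i,d})$ a $\mathbb{Z}^d$-valued sequence indexed by $\{0,\dots,n_i\}$, $x^{(i)}_0=0$, $x^{i,j}$ nondecreasing for $i\ne j$, $x^{i,i}_{n+1}-x^{i,i}_n\ge-1$; $(n_1,\dots,n_d)$ is its length; $x^{i,j}(n)=x^{i,j}_n$. A solution of $(\mathrm r,x)$ is $\mathrm s\in\mathbb{Z}_+^d$, $\mathrm s\le$ length, with $r_j+\sum_ix^{i,j}(s_i)=0$ for all $j$; the smallest solution is a solution that is coordinatewise $\le$ every solution. $S_d^{\mathrm r}$: $x\in S_d$ whose length lies in $\mathbb{N}^d$ and is the smallest solution of $(\mathrm r,x)$; $\bar S_d^{\mathrm r}$: those $x\in S_d^{\mathrm r}$ with $x^{i,i}_k=-k$ for all $k,i$. For $x\in S_d$ set $k_i=-\min_{0\le n\le n_i}x^{i,i}_n$, $\tau^{(i)}_k=\min\{n\ge0:x^{i,i}_n=-k\}$ ($0\le k\le k_i$) and $\bar x^{i,j}_k=x^{i,j}(\tau^{(i)}_k)$,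 $0\le k\le k_i$. Cyclical permutations: for $g$ on $\{0,\dots,m\}$ with $g(0)=0$, $1\le n\le m$, $0\le q\le n-1$: $g_{q,n}(h)=g(q+h)-g(q)$ for $0\le h\le n-q$, $g_{q,n}(h)=g(h-(n-q))+g(n)-g(q)$ for $n-q\le h\le n$, $g_{q,n}(h)=g(h)$ for $h\ge n$; for $y\in S_d$ of length $\mathrm m\in\mathbb N^d$ and $\mathrm q\le\mathrm m-1_d$, $y_{\mathrm q,\mathrm m}=(y^{(1)}_{q_1,m_1},\dots,y^{(d)}_{q_d,m_d})$. If $\mathrm m$ is a solution of $(\mathrm r,y)$, $y_{\mathrm q,\mathrm m}$ is a good cyclical permutation of $y$ (with respect to $\mathrm r$) if $\mathrm m$ is the smallest solution of $(\mathrm r,y_{\mathrm q,\mathrm m})$; the number of good cyclical permutations is the number of such $\mathrm q$. *)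

(* Defs.v *)
From mathcomp Require Import all_boot all_order all_algebra.
Set Implicit Arguments. Unset Strict Implicit. Unset Printing Implicit Defensive.
Import Order.TTheory GRing.Theory Num.Theory.

Local Open Scope ring_scope.

(* A family x = (x^(1),...,x^(d)) is encoded as
     x : 'I_d -> nat -> 'I_d -> int,   x i n j = x^{i,j}_n,
   together with its length  len : 'I_d -> nat  (len i = n_i).
   Values of x i n j for n > len i are irrelevant. *)
Definition mtfamily (d : nat) := 'I_d -> nat -> 'I_d -> int.

Definition in_S (d : nat) (x : mtfamily d) (len : 'I_d -> nat) : Prop :=
  [/\ (forall i j, x i 0%N j = 0),
      (forall i j, i != j -> forall n, (n < len i)%N -> x i n j <= x i n.+1 j)
    & (forall i n, (n < len i)%N -> x i n.+1 i - x i n i >= -1)].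

Definition is_solution (d : nat) (r : 'I_d -> nat) (x : mtfamily d)
  (len : 'I_d -> nat) (s : 'I_d -> nat) : bool :=
  [forall i, (s i <= len i)%N] &&
  [forall j, (r j)%:Z + \sum_(i < d) x i (s i) j == 0].

(* s is the smallest solution of (r, x): a solution that is coordinatewise
   below every solution (all solutions are <= len, so the quantification is
   over a finite type). *)
Definition is_smallest_solution (d : nat) (r : 'I_d -> nat) (x : mtfamily d)
  (len : 'I_d -> nat) (s : 'I_d -> nat) : bool :=
  is_solution r x len s &&
  [forall s' : {dffun forall i : 'I_d, 'I_(len i).+1},
     is_solution r x len (fun i => nat_of_ord (s' i)) ==>
     [forall i, (s i <= s' i)%N]].

Definition in_Sr (d : nat) (r : 'I_d -> nat) (x : mtfamily d)
  (len : 'I_d -> nat) : Prop :=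
  [/\ in_S x len, (forall i, (0 < len i)%N) & is_smallest_solution r x len len].

Definition cyc (g : nat -> int) (q n : nat) (h : nat) : int :=
  if (h <= n - q)%N then g (q + h)%N - g q
  else if (h <= n)%N then g (h - (n - q))%N + g n - g q
  else g h.

Definition cycperm (d : nat) (y : mtfamily d) (q m : 'I_d -> nat) : mtfamily d :=
  fun i h j => cyc (fun k => y i k j) (q i) (m i) h.

Definition ngood (d : nat) (r : 'I_d -> nat) (y : mtfamily d)
  (m : 'I_d -> nat) : nat :=
  #|[pred q : {dffun forall i : 'I_d, 'I_(m i)} |
     is_smallest_solution r (cycperm y (fun i => nat_of_ord (q i)) m) m m]|.

Definition kbar (d : nat) (x : mtfamily d) (len : 'I_d -> nat) (i : 'I_d) : nat :=
  absz (- \big[Order.min/0%Z]_(n < (len i).+1) x i n i).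

Definition tau (d : nat) (x : mtfamily d) (len : 'I_d -> nat) (i : 'I_d)
  (k : nat) : nat :=
  find (fun n => x i n i == - (k%:Z)) (iota 0 (len i).+1).

Definition xbar (d : nat) (x : mtfamily d) (len : 'I_d -> nat) : mtfamily d :=
  fun i k j => x i (tau x len i k) j.

(* Main.v *)
Require Import Defs.
From mathcomp Require Import all_boot all_order all_algebra zify.
From Stdlib Require Import FunctionalExtensionality.
Set Implicit Arguments. Unset Strict Implicit. Unset Printing Implicit Defensive.
Import Order.TTheory GRing.Theory Num.Theory.
Local Open Scope ring_scope.


Lemma mono_range (g : nat -> int) (N : nat) :
  (forall n, (n < N)%N -> g n <= g n.+1) ->
  forall m m', (m <= m')%N -> (m' <= N)%N -> g m <= g m'.
Proof.
move=> H m m' hm; elim: m' hm => [|m' IH].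
  by rewrite leqn0 => /eqP ->.
rewrite leq_eqVlt => /orP [/eqP -> //|hlt] hN.
apply: le_trans (IH hlt (ltnW hN)) (H _ hN).
Qed.

Lemma hit (g : nat -> int) (N : nat) (L : int) (h : nat) :
  L <= g 0%N -> (forall n, (n < N)%N -> g n.+1 - g n >= -1) ->
  (h <= N)%N -> g h <= L ->
  exists h', [/\ (h' <= h)%N, g h' = L & forall h'', (h'' < h')%N -> L < g h''].
Proof.
move=> h0 Hs hN hL.
have ex : exists m, (m <= h)%N && (g m <= L) by exists h; rewrite leqnn hL.
case: (ex_minnP ex) => m /andP [hm gm] mmin.
exists m; split => //.
  case: m hm gm mmin => [|m] hm gm mmin; first by apply/le_anti; rewrite gm h0.
  have : ~~ ((m <= h)%N && (g m <= L)).
    by apply/negP => /mmin; rewrite ltnn.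
  rewrite (ltnW hm) /= -ltNge => gt.
  have := Hs m (leq_trans hm hN); lia.
move=> h'' lt; rewrite ltNge; apply/negP => le.
have := mmin h''; rewrite le (leq_trans (ltnW lt) hm) => /(_ isT).
by rewrite leqNgt lt.
Qed.

Lemma find_iota_gen (P : pred nat) (h : nat) : forall l m,
  (m <= h)%N -> (h < m + l)%N -> P h -> (forall h', (m <= h')%N -> (h' < h)%N -> ~~ P h') ->
  find P (iota m l) = (h - m)%N.
Proof.
elim=> [|l IH] m hm hl Ph Hn; first by lia.
rewrite /= ; case: (boolP (P m)) => Pm.
  case: (ltngtP m h) => c; [by move: (Hn m (leqnn m) c); rewrite Pm | lia | by rewrite c subnn].
have mh : (m < h)%N by rewrite ltn_neqAle hm andbT; apply/eqP => e; rewrite e Ph in Pm.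
rewrite (IH m.+1) //; [lia | lia |].
by move=> h' a b; apply: Hn => //; lia.
Qed.

Lemma find_iota (P : pred nat) (h N : nat) :
  (h <= N)%N -> P h -> (forall h', (h' < h)%N -> ~~ P h') ->
  find P (iota 0 N.+1) = h.
Proof.
move=> hN Ph Hn; rewrite (@find_iota_gen P h) ?subn0 //.
by move=> h' _; apply: Hn.
Qed.


Definition Fs d (r : 'I_d -> nat) (y : mtfamily d) (s : 'I_d -> nat) (j : 'I_d) : int :=
  (r j)%:Z + \sum_(i < d) y i (s i) j.
Definition upd d (s : 'I_d -> nat) (j0 : 'I_d) (v : nat) : 'I_d -> nat :=
  fun i => if i == j0 then v else s i.

Lemma F_upd d r (y : mtfamily d) s j0 v j :
  Fs r y (upd s j0 v) j = Fs r y s j - y j0 (s j0) j + y j0 v j.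
Proof.
rewrite /Fs (bigD1 j0) //= [in RHS](bigD1 j0) //= /upd eqxx.
rewrite (eq_bigr (fun i => y i (s i) j)) => [|i /negbTE -> //].
lia.
Qed.

Lemma F_le d r (y y' : mtfamily d) s s' j :
  (forall i, y i (s i) j <= y' i (s' i) j) -> Fs r y s j <= Fs r y' s' j.
Proof. by move=> H; rewrite /Fs lerD2l; apply: ler_sum => i _. Qed.

Lemma solP d r (y : mtfamily d) m s :
  is_solution r y m s = [forall i, (s i <= m i)%N] && [forall j, Fs r y s j == 0].
Proof. by []. Qed.

Lemma smallestP d r (y : mtfamily d) m s :
  is_smallest_solution r y m s <->
  [/\ (forall i, (s i <= m i)%N), (forall j, Fs r y s j = 0) &
      forall u, (forall i, (u i <= m i)%N) -> (forall j, Fs r y u j = 0) ->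
        forall i, (s i <= u i)%N].
Proof.
rewrite /is_smallest_solution solP; split.
  case/andP => /andP [/forallP H1 /forallP H2] /forallP H3; split.
  - by move=> i; apply: H1.
  - by move=> j; apply/eqP; apply: H2.
  move=> u hu hF i.
  pose s' : {dffun forall i : 'I_d, 'I_(m i).+1} :=
    @finfun _ (fun i => 'I_(m i).+1) (fun i => inord (u i)).
  have e : (fun i => nat_of_ord (s' i)) = u.
    by apply: functional_extensionality => i'; rewrite /s' ffunE inordK // ltnS.
  have /implyP H := H3 s'.
  rewrite e solP in H.
  have /forallP/(_ i) : [forall i, (s i <= s' i)%N].
    by apply: H; apply/andP; split; apply/forallP => i'; [apply: hu | apply/eqP; apply: hF].
  by rewrite /s' ffunE inordK // ltnS.
case=> H1 H2 H3; apply/andP; split.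
  by apply/andP; split; apply/forallP => i; [apply: H1 | apply/eqP; apply: H2].
apply/forallP => s'; rewrite solP; apply/implyP => /andP [/forallP h1 /forallP h2].
apply/forallP; apply: H3 => //.
by move=> j; apply/eqP; apply: h2.
Qed.

Lemma in_S_mono d (y : mtfamily d) m i j h h' :
  in_S y m -> i != j -> (h <= h')%N -> (h' <= m i)%N -> y i h j <= y i h' j.
Proof.
case=> _ H _ ij; apply: (@mono_range (fun n => y i n j) (m i)).
by move=> n; apply: H.
Qed.

Lemma in_S_ge0 d (y : mtfamily d) m i j h :
  in_S y m -> i != j -> (h <= m i)%N -> 0 <= y i h j.
Proof.
move=> yS ij hm; case: (yS) => H0 _ _.
by rewrite -(H0 i j); apply: (in_S_mono yS ij (leq0n h) hm).
Qed.

Lemma F_ge0_at0 d r (y : mtfamily d) m s j : in_S y m ->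
  (forall i, (s i <= m i)%N) -> s j = 0%N -> 0 <= Fs r y s j.
Proof.
move=> yS hm e; rewrite /Fs (bigD1 j) //= e.
case: (yS) => H0 _ _; rewrite H0 add0r.
apply: addr_ge0 => //; apply: sumr_ge0 => i ij.
by apply: (in_S_ge0 yS ij).
Qed.

Lemma descent d r (y : mtfamily d) m : in_S y m ->
  forall s, (forall i, (s i <= m i)%N) -> (forall j, Fs r y s j <= 0) ->
  exists u, (forall i, (u i <= s i)%N) /\ (forall j, Fs r y u j = 0).
Proof.
move=> yS.
suff: forall N s, ((\sum_(i < d) s i)%N <= N)%N -> (forall i, (s i <= m i)%N) ->
  (forall j, Fs r y s j <= 0) ->
  exists u, (forall i, (u i <= s i)%N) /\ (forall j, Fs r y u j = 0).
  by move=> H s; apply: (H _ s (leqnn _)).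
elim=> [|N IH] s hN hm hF;
  (case: (boolP [forall j, Fs r y s j == 0]) => [/forallP H0|];
  [by exists s; split => // j; apply/eqP; apply: H0|]);
  rewrite negb_forall => /existsP [j hj];
  have hlt : Fs r y s j < 0 by rewrite lt_neqAle hj hF.
  have sj0 : s j = 0%N.
    by move: hN; rewrite leqn0 sum_nat_eq0 => /forall_inP /(_ j isT) /eqP.
  by have := F_ge0_at0 r yS hm sj0; rewrite leNgt hlt.
have sj : (0 < s j)%N.
  rewrite lt0n; apply/negP => /eqP sj0.
  by have := F_ge0_at0 r yS hm sj0; rewrite leNgt hlt.
pose s' := upd s j (s j).-1.
have hs' : forall i, (s' i <= s i)%N by move=> i; rewrite /s' /upd; case: eqP => // ->; lia.
have [u [hu hFu]] : exists u, (forall i, (u i <= s' i)%N) /\ (forall j, Fs r y u j = 0).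
  apply: (IH s').
  - have e1 : (\sum_(i < d) s i = s j + \sum_(i < d | i != j) s i)%N by rewrite (bigD1 j).
    have e2 : (\sum_(i < d) s' i = (s j).-1 + \sum_(i < d | i != j) s i)%N.
      rewrite (bigD1 j) //= /s' /upd eqxx; congr (_ + _)%N.
      by apply: eq_bigr => i ij; rewrite (negbTE ij).
    move: hN; rewrite e1 e2; move: sj; clear; lia.
  - by move=> i; apply: leq_trans (hs' i) (hm i).
  move=> j'; rewrite F_upd.
  case: (eqVneq j' j) => [->|jj].
    case: (yS) => _ _ Hd; have := Hd j (s j).-1; rewrite prednK //.
    move=> /(_ (hm j)); lia.
  have := @in_S_mono _ y m j j' ((s j).-1) (s j) yS; rewrite eq_sym jj => /(_ isT (leq_pred _) (hm j)).
  have := hF j'; lia.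
by exists u; split => // i; apply: leq_trans (hu i) (hs' i).
Qed.


Ltac simp_if := repeat (match goal with |- context [if ?b then _ else _] =>
  (have ->: b = true by lia) || (have -> : b = false by lia) end).

Lemma cyc0 g q n : (q <= n)%N -> cyc g q n 0 = 0.
Proof. by move=> _; rewrite /cyc leq0n addn0 subrr. Qed.

Lemma cyc_n g q n : g 0%N = 0 -> (q <= n)%N -> cyc g q n n = g n.
Proof.
move=> g0 qn; rewrite /cyc leqnn.
case: ifP => h.
  have -> : q = 0%N by lia.
  by rewrite add0n g0 subr0.
have -> : (n - (n - q) = q)%N by lia.
lia.
Qed.

Lemma cyc_step g q n h : g 0%N = 0 -> (q < n)%N -> (h < n)%N ->
  exists p, (p < n)%N /\ cyc g q n h.+1 - cyc g q n h = g p.+1 - g p.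
Proof.
move=> g0 qn hn; rewrite /cyc.
case: (ltnP h (n - q)) => c.
  exists (q + h)%N; split; first by lia.
  simp_if.
  rewrite addnS; lia.
case: (eqVneq h (n - q)%N) => e.
  exists 0%N; split; first by lia.
  simp_if.
  have -> : (h.+1 - (n - q) = 1)%N by lia.
  have -> : (q + h = n)%N by lia.
  rewrite g0; lia.
exists (h - (n - q))%N; split; first by lia.
simp_if.
rewrite subSn; last by lia.
lia.
Qed.

Lemma cycperm_in_S d (x : mtfamily d) n q :
  in_S x n -> (forall i, (q i < n i)%N) -> in_S (cycperm x q n) n.
Proof.
move=> [H0 Hm Hd] hq; split.
- by move=> i j; rewrite /cycperm cyc0 // ltnW.
- move=> i j ij h hn; rewrite /cycperm.
  have [p [pn e]] := @cyc_step (fun k => x i k j) (q i) (n i) h (H0 i j) (hq i) hn.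
  have := Hm i j ij p pn; rewrite -subr_ge0 => H; rewrite -subr_ge0.
  by move: e => /= ->.
- move=> i h hn; rewrite /cycperm.
  have [p [pn e]] := @cyc_step (fun k => x i k i) (q i) (n i) h (H0 i i) (hq i) hn.
  by move: e => /= ->; apply: Hd.
Qed.

Lemma cycperm_n d (x : mtfamily d) n q i j :
  in_S x n -> (q i <= n i)%N -> cycperm x q n i (n i) j = x i (n i) j.
Proof. by move=> [H0 _ _] hq; rewrite /cycperm cyc_n. Qed.


Lemma Sr_sol d r (x : mtfamily d) n : in_Sr r x n -> forall j, Fs r x n j = 0.
Proof. by case=> _ _ /smallestP [_ H _]. Qed.

Lemma Sr_le0 d r (x : mtfamily d) n i : in_Sr r x n -> x i (n i) i <= 0.
Proof.
move=> hx; have := Sr_sol hx i; rewrite /Fs (bigD1 i) //=.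
set S := (\sum_(_ < _ | _) _).
have : 0 <= S.
  apply: sumr_ge0 => k ki; case: hx => xS _ _; exact: (in_S_ge0 xS ki).
lia.
Qed.

Lemma Sr_strict d r (x : mtfamily d) n i h : in_Sr r x n -> (h < n i)%N ->
  x i (n i) i < x i h i.
Proof.
move=> hx hn; case: (hx) => xS npos /smallestP [_ Hsol Hmin].
rewrite ltNge; apply/negP => le.
case: (xS) => H0 Hm Hd.
have g0 : x i (n i) i <= x i 0%N i by rewrite H0; apply: Sr_le0 hx.
have [h' [h'h e _]] := @hit (fun m => x i m i) (n i) (x i (n i) i) h
  g0 (fun m hm => Hd i m hm) (ltnW hn) le.
pose s := upd n i h'.
have bnd : forall k, (s k <= n k)%N by move=> k; rewrite /s /upd; case: eqP => [->|//]; lia.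
have [u [hu hFu]] : exists u, (forall k, (u k <= s k)%N) /\ (forall j, Fs r x u j = 0).
  apply: (descent xS).
    by [].
  move=> j; rewrite F_upd Hsol.
  case: (eqVneq i j) => [<-|ij]; first by rewrite /= e; lia.
  have := @in_S_mono _ x n i j h' (n i) xS ij; lia.
have := Hmin u (fun k => leq_trans (hu k) (bnd k)) hFu i.
have := hu i; rewrite /s /upd eqxx; lia.
Qed.

Lemma kbarE d r (x : mtfamily d) n i : in_Sr r x n ->
  (kbar x n i)%:Z = - x i (n i) i.
Proof.
move=> hx; rewrite /kbar.
have -> : \big[Order.min/0%Z]_(h < (n i).+1) x i h i = x i (n i) i.
  apply: le_anti; apply/andP; split.
    exact: (bigmin_le 0%Z (@ord_max (n i)) (fun h : 'I_(n i).+1 => x i h i)).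
  apply: le_bigmin; first exact: Sr_le0 hx.
  move=> h _; have := ltn_ord h; rewrite ltnS leq_eqVlt => /orP [/eqP ->|lt] //.
  by apply: ltW; apply: (Sr_strict hx).
rewrite gez0_abs //; have := Sr_le0 i hx; lia.
Qed.

Lemma kbar_pos d r (x : mtfamily d) n i : in_Sr r x n -> (0 < kbar x n i)%N.
Proof.
move=> hx; have := kbarE i hx; case: (hx) => [[H0 _ _] np _].
have := Sr_strict hx (np i); rewrite H0; lia.
Qed.

Lemma tau_spec d r (x : mtfamily d) n i b : in_Sr r x n -> (b <= kbar x n i)%N ->
  [/\ (tau x n i b <= n i)%N, x i (tau x n i b) i = - (b%:Z) &
      forall h, (h < tau x n i b)%N -> - (b%:Z) < x i h i].
Proof.
move=> hx hb; case: (hx) => [[H0 Hm Hd] np _].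
have g0 : - (b%:Z) <= x i 0%N i by rewrite H0; lia.
have gn : x i (n i) i <= - (b%:Z) by have := kbarE i hx; lia.
have [h' [h'n e hlt]] := @hit (fun m => x i m i) (n i) (- (b%:Z)) (n i)
  g0 (fun m hm => Hd i m hm) (leqnn _) gn.
have -> : tau x n i b = h'.
  rewrite /tau; apply: find_iota => //; first by apply/eqP.
  by move=> h2 lt; have := hlt h2 lt; rewrite lt_neqAle eq_sym => /andP [].
by split.
Qed.

Lemma tau_k d r (x : mtfamily d) n i : in_Sr r x n -> tau x n i (kbar x n i) = n i.
Proof.
move=> hx; have [tn e _] := tau_spec hx (leqnn (kbar x n i)).
case: (ltngtP (tau x n i (kbar x n i)) (n i)) => // lt; last by move: tn; rewrite leqNgt lt.
have := Sr_strict hx lt; have := kbarE i hx; lia.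
Qed.

Lemma tau_lt d r (x : mtfamily d) n i b : in_Sr r x n -> (b < kbar x n i)%N ->
  (tau x n i b < n i)%N.
Proof.
move=> hx hb; have [tn e _] := tau_spec hx (ltnW hb).
rewrite ltn_neqAle tn andbT; apply/eqP => en.
have := kbarE i hx; move: e; rewrite en; lia.
Qed.

Lemma tau_mono d r (x : mtfamily d) n i b b' : in_Sr r x n ->
  (b <= b')%N -> (b' <= kbar x n i)%N -> (tau x n i b <= tau x n i b')%N.
Proof.
move=> hx bb hb'; have [_ e lt] := tau_spec hx (leq_trans bb hb').
have [_ e' _] := tau_spec hx hb'.
rewrite leqNgt; apply/negP => /lt; rewrite e'; lia.
Qed.

Lemma tau_inj d r (x : mtfamily d) n i b b' : in_Sr r x n ->
  (b <= kbar x n i)%N -> (b' <= kbar x n i)%N -> tau x n i b = tau x n i b' -> b = b'.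
Proof.
move=> hx hb hb' e; have [_ e1 _] := tau_spec hx hb; have [_ e2 _] := tau_spec hx hb'.
move: e1 e2; rewrite e; lia.
Qed.

Lemma tau0 d r (x : mtfamily d) n i : in_Sr r x n -> tau x n i 0 = 0%N.
Proof.
move=> hx; have [_ _ lt] := tau_spec hx (leq0n (kbar x n i)).
case: (posnP (tau x n i 0)) => // p; have := lt 0%N p.
by case: hx => [[H0 _ _] _ _]; rewrite H0.
Qed.

Lemma xbar_in_S d r (x : mtfamily d) n : in_Sr r x n -> in_S (xbar x n) (kbar x n).
Proof.
move=> hx; case: (hx) => [[H0 Hm Hd] np _] ; split.
- by move=> i j; rewrite /xbar (tau0 i hx).
- move=> i j ij b hb; rewrite /xbar.
  have xS : in_S x n by case: hx.
  apply: (@in_S_mono _ x n i j _ _ xS ij).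
  + exact: tau_mono hx (leqnSn b) hb.
  + by rewrite -(tau_k i hx); apply: tau_mono hx hb (leqnn _).
- move=> i b hb; rewrite /xbar.
  have [_ e1 _] := tau_spec hx (ltnW hb); have [_ e2 _] := tau_spec hx hb.
  rewrite e1 e2; lia.
Qed.

Lemma xbar_k d r (x : mtfamily d) n i j : in_Sr r x n ->
  xbar x n i (kbar x n i) j = x i (n i) j.
Proof. by move=> hx; rewrite /xbar (tau_k i hx). Qed.


Lemma cyc_front g q n h : (h <= n - q)%N -> cyc g q n h = g (q + h)%N - g q.
Proof. by move=> hh; rewrite /cyc hh. Qed.

Lemma cyc_back g q n h : g 0%N = 0 -> (q <= n)%N -> (h <= q)%N ->
  cyc g q n (n - q + h) = g h + g n - g q.
Proof.
move=> g0 qn hq; rewrite /cyc.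
case: (posnP h) => [->|hp].
  rewrite addn0 leqnn subnKC // g0; lia.
simp_if.
have -> : (n - q + h - (n - q) = h)%N by lia.
by [].
Qed.

Definition Tm d (x : mtfamily d) n (a : 'I_d -> nat) i b : nat :=
  if (b <= kbar x n i - a i)%N then (tau x n i (a i + b) - tau x n i (a i))%N
  else (n i - tau x n i (a i) + tau x n i (b - (kbar x n i - a i)))%N.

Definition qa d (x : mtfamily d) n (a : 'I_d -> nat) : 'I_d -> nat :=
  fun i => tau x n i (a i).

Lemma T1 d r (x : mtfamily d) n a i b j : in_Sr r x n -> (a i < kbar x n i)%N ->
  (b <= kbar x n i)%N ->
  cycperm x (qa x n a) n i (Tm x n a i b) j = cycperm (xbar x n) a (kbar x n) i b j.
Proof.
move=> hx ha hb; rewrite /cycperm /Tm /qa /xbar.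
case: (hx) => [[H0 _ _] _ _].
set K := kbar x n i; set A := a i.
case: ifP => c.
  have m1 := tau_mono hx (leq_addr b A) (_ : (A + b <= K)%N).
  have m2 := tau_spec hx (_ : (A + b <= K)%N).
  have bK : (A + b <= K)%N by lia.
  have [t1 _ _] := m2 bK.
  rewrite !cyc_front //; last by have := m1 bK; lia.
  by rewrite subnKC //; apply: m1.
have A1 : (b - (K - A) <= A)%N by lia.
have m1 := tau_mono hx A1 (ltnW ha).
have [tA _ _] := tau_spec hx (ltnW ha).
have qn : (tau x n i A <= n i)%N by apply: ltnW; exact: (tau_lt hx ha).
rewrite cyc_back //.
have eb : b = (K - A + (b - (K - A)))%N by move: c; clear; lia.
rewrite [in RHS]eb.
have AK : (A <= K)%N by lia.
rewrite cyc_back //; last by rewrite (tau0 i hx).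
by rewrite (tau_k i hx).
Qed.

Lemma Tz_diag d r (x : mtfamily d) n a i b : in_Sr r x n -> (a i < kbar x n i)%N ->
  (b <= kbar x n i)%N -> cycperm (xbar x n) a (kbar x n) i b i = - (b%:Z).
Proof.
move=> hx ha hb; rewrite /cycperm /xbar /cyc.
set K := kbar x n i; set A := a i.
have [_ eA _] := tau_spec hx (ltnW ha).
have [_ eK _] := tau_spec hx (leqnn K).
case: ifP => c.
  have bK : (A + b <= K)%N by move: c hb ha; rewrite /K /A; clear; lia.
  have [_ e _] := tau_spec hx bK.
  rewrite e eA; lia.
rewrite hb.
have bK : (b - (K - A) <= K)%N by lia.
have [_ e _] := tau_spec hx bK.
rewrite e eA eK; move: c hb ha; rewrite /K /A; clear; lia.
Qed.

Lemma Tm_k d r (x : mtfamily d) n a i : in_Sr r x n -> (a i < kbar x n i)%N ->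
  Tm x n a i (kbar x n i) = n i.
Proof.
move=> hx ha; rewrite /Tm.
have qn : (tau x n i (a i) < n i)%N by exact: (tau_lt hx ha).
case: ifP => c.
  have -> : (a i + kbar x n i = kbar x n i)%N by lia.
  have -> : a i = 0%N by lia.
  by rewrite (tau_k i hx) (tau0 i hx) subn0.
have -> : (kbar x n i - (kbar x n i - a i) = a i)%N by lia.
lia.
Qed.

Lemma Tm0 d r (x : mtfamily d) n a i : in_Sr r x n -> (a i < kbar x n i)%N ->
  Tm x n a i 0 = 0%N.
Proof. by move=> hx ha; rewrite /Tm leq0n addn0 subnn. Qed.

Lemma T_first d r (x : mtfamily d) n a i b h : in_Sr r x n -> (a i < kbar x n i)%N ->
  (b <= kbar x n i)%N -> (h < Tm x n a i b)%N ->
  - (b%:Z) < cycperm x (qa x n a) n i h i.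
Proof.
move=> hx ha hb; rewrite /Tm /cycperm /qa.
case: (hx) => [[H0 _ _] _ _].
set K := kbar x n i; set A := a i; set Q := tau x n i A.
have [tA eA _] := tau_spec hx (ltnW ha).
have [tK eK ltK] := tau_spec hx (leqnn K).
rewrite (tau_k i hx) in tK eK ltK.
have qn : (Q < n i)%N by exact: (tau_lt hx ha).
case: ifP => c hh; move: c hh; rewrite -/K -/A -/Q => c hh.
  have bK : (A + b <= K)%N by move: c hb ha; rewrite /K /A; clear; lia.
  have [t1 e1 lt1] := tau_spec hx bK.
  rewrite cyc_front; last by lia.
  have := lt1 (Q + h)%N; rewrite -/Q eA => /(_ ltac:(lia)); lia.
case: (leqP h (n i - Q)) => hq.
  rewrite cyc_front //.
  case: (ltnP (Q + h) (n i)) => e.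
    have := ltK _ e; rewrite eA; move: c hb ha; rewrite /K /A; clear; lia.
  have -> : (Q + h = n i)%N by lia.
  rewrite eK eA; move: c hb ha; rewrite /K /A; clear; lia.
have A1 : (b - (K - A) <= K)%N by lia.
have [t1 e1 lt1] := tau_spec hx A1.
have A2 : (b - (K - A) <= A)%N by move: c hb ha; rewrite /K /A; clear; lia.
have m1 : (tau x n i (b - (K - A)) <= Q)%N by exact: (tau_mono hx A2 (ltnW ha)).
have h0 : (h - (n i - Q) <= Q)%N by lia.
have hh2 : (h - (n i - Q) < tau x n i (b - (K - A)))%N by lia.
have eh : h = (n i - Q + (h - (n i - Q)))%N by lia.
have g0 : x i 0%N i = 0 by apply: H0.
have qn' : (Q <= n i)%N by apply: ltnW.
rewrite {1}eh cyc_back //.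
have := lt1 _ hh2.
rewrite eK eA; move: c hb ha; rewrite /K /A; clear; lia.
Qed.


Lemma T_val d r (x : mtfamily d) n a i b : in_Sr r x n -> (a i < kbar x n i)%N ->
  (b <= kbar x n i)%N -> cycperm x (qa x n a) n i (Tm x n a i b) i = - (b%:Z).
Proof. by move=> hx ha hb; rewrite (T1 _ hx ha hb) (Tz_diag hx ha hb). Qed.

Lemma T_strict d r (x : mtfamily d) n a i b b' : in_Sr r x n -> (a i < kbar x n i)%N ->
  (b < b')%N -> (b' <= kbar x n i)%N -> (Tm x n a i b < Tm x n a i b')%N.
Proof.
move=> hx ha bb hb'; have hb := ltnW (leq_trans bb hb').
rewrite ltnNge; apply/negP; rewrite leq_eqVlt => /orP [/eqP e|lt].
  have := T_val hx ha hb; rewrite -e (T_val hx ha hb'); lia.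
have := T_first hx ha hb lt; rewrite (T_val hx ha hb'); lia.
Qed.

Lemma T_le_n d r (x : mtfamily d) n a i b : in_Sr r x n -> (a i < kbar x n i)%N ->
  (b <= kbar x n i)%N -> (Tm x n a i b <= n i)%N.
Proof.
move=> hx ha hb; rewrite -(Tm_k hx ha).
move: hb; rewrite leq_eqVlt => /orP [/eqP ->//|lt].
exact: ltnW (T_strict hx ha lt (leqnn _)).
Qed.

Lemma qa_lt d r (x : mtfamily d) n a : in_Sr r x n -> (forall i, (a i < kbar x n i)%N) ->
  forall i, (qa x n a i < n i)%N.
Proof. by move=> hx ha i; apply: (tau_lt hx (ha i)). Qed.

Lemma T_back d r (x : mtfamily d) n a i h : in_Sr r x n ->
  (forall i, (a i < kbar x n i)%N) -> (h <= n i)%N ->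
  exists t, [/\ (t <= kbar x n i)%N, (Tm x n a i t <= h)%N &
    - (t%:Z) <= cycperm x (qa x n a) n i h i].
Proof.
move=> hx ha hn.
have xS : in_S x n by case: hx.
have yS := cycperm_in_S xS (qa_lt hx ha).
set y := cycperm x (qa x n a) n.
case: (lerP 0 (y i h i)) => sg.
  by exists 0%N; split; rewrite ?(Tm0 hx (ha i)) //; lia.
have yk : - ((kbar x n i)%:Z) <= y i h i.
  move: hn; rewrite leq_eqVlt => /orP [/eqP ->|lt].
    by rewrite /y -{1}(Tm_k hx (ha i)) (T_val hx (ha i) (leqnn _)).
  apply: ltW; rewrite /y; apply: (T_first hx (ha i) (leqnn _)); by rewrite (Tm_k hx (ha i)).
exists (absz (y i h i)); split.
- lia.
- case: (yS) => Y0 _ Yd.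
  have g0 : - ((absz (y i h i))%:Z) <= y i 0%N i by rewrite /y Y0; lia.
  have gh : y i h i <= - ((absz (y i h i))%:Z) by lia.
  have [h' [h'h e hlt]] := @hit (fun m => y i m i) (n i) _ h g0 (fun m hm => Yd i m hm) hn gh.
  have tk : (absz (y i h i) <= kbar x n i)%N by lia.
  rewrite leqNgt; apply/negP => lt.
  case: (ltngtP (Tm x n a i (absz (y i h i))) h') => c.
  + have := hlt _ c; rewrite /y (T_val hx (ha i) tk); lia.
  + have := T_first hx (ha i) tk c; rewrite -/y e; lia.
  + lia.
- lia.
Qed.


Lemma good_first d r (x : mtfamily d) n q : in_Sr r x n -> (forall i, (q i < n i)%N) ->
  is_smallest_solution r (cycperm x q n) n n ->
  forall i h, (h < q i)%N -> x i (q i) i < x i h i.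
Proof.
move=> hx hq hs i h hh.
have xS : in_S x n by case: hx.
have hy : in_Sr r (cycperm x q n) n by split; [exact: cycperm_in_S | by case: hx | by []].
have lt : (n i - q i + h < n i)%N by have := hq i; lia.
have := Sr_strict hy lt.
case: (xS) => H0 _ _.
rewrite /cycperm cyc_back ?H0 //; last by apply: ltnW.
  rewrite cyc_n ?H0 //; last by apply: ltnW.
  lia.
by apply: ltnW.
Qed.

Lemma good_tau d r (x : mtfamily d) n q : in_Sr r x n -> (forall i, (q i < n i)%N) ->
  is_smallest_solution r (cycperm x q n) n n ->
  exists a, (forall i, (a i < kbar x n i)%N) /\ forall i, q i = tau x n i (a i).
Proof.
move=> hx hq hs.
have hf := good_first hx hq hs.
have xS : in_S x n by case: hx.
case: (xS) => H0 _ _.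
have le0 : forall i, x i (q i) i <= 0.
  move=> i; case: (posnP (q i)) => [->|p]; first by rewrite H0.
  by have := hf i 0%N p; rewrite H0; lia.
have ltk : forall i, - ((kbar x n i)%:Z) < x i (q i) i.
  by move=> i; rewrite (kbarE i hx) opprK; apply: (Sr_strict hx (hq i)).
exists (fun i => absz (x i (q i) i)); split.
  by move=> i; have := le0 i; have := ltk i; lia.
move=> i.
have ak : (absz (x i (q i) i) <= kbar x n i)%N by have := le0 i; have := ltk i; lia.
have [tn e hlt] := tau_spec hx ak.
case: (ltngtP (q i) (tau x n i (absz (x i (q i) i)))) => c //.
  by have := hlt _ c; have := le0 i; lia.
by have := hf i _ c; rewrite e; have := le0 i; lia.
Qed.

Lemma good_equiv d r (x : mtfamily d) n a : in_Sr r x n ->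
  (forall i, (a i < kbar x n i)%N) ->
  is_smallest_solution r (cycperm x (qa x n a) n) n n <->
  is_smallest_solution r (cycperm (xbar x n) a (kbar x n)) (kbar x n) (kbar x n).
Proof.
move=> hx ha.
have xS : in_S x n by case: hx.
have yS := cycperm_in_S xS (qa_lt hx ha).
have xbS := xbar_in_S hx.
have zS := cycperm_in_S xbS ha.
have Fy : forall j, Fs r (cycperm x (qa x n a) n) n j = 0.
  move=> j; rewrite -(Sr_sol hx j) /Fs; congr (_ + _); apply: eq_bigr => i _.
  by rewrite cycperm_n // ltnW // (qa_lt hx ha).
have Fz : forall j, Fs r (cycperm (xbar x n) a (kbar x n)) (kbar x n) j = 0.
  move=> j; rewrite -(Sr_sol hx j) /Fs; congr (_ + _); apply: eq_bigr => i _.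
  by rewrite cycperm_n // ?(xbar_k _ _ hx) // ltnW.
split.
  case/smallestP => _ _ Hmin; apply/smallestP; split => // u hu hFu i.
  pose s := fun i => Tm x n a i (u i).
  have hs : forall i, (s i <= n i)%N by move=> k; apply: (T_le_n hx (ha k) (hu k)).
  have hFs : forall j, Fs r (cycperm x (qa x n a) n) s j = 0.
    move=> j; rewrite -(hFu j) /Fs; congr (_ + _); apply: eq_bigr => k _.
    by rewrite /s (T1 _ hx (ha k) (hu k)).
  have := Hmin s hs hFs i; rewrite /s.
  rewrite leqNgt => H; rewrite leqNgt; apply: contra H => lt; rewrite -(Tm_k hx (ha i)).
  exact: (T_strict hx (ha i) lt (leqnn _)).
case/smallestP => _ _ Hmin; apply/smallestP; split => // u hu hFu i.
have [t Ht] := fin_all_exists (fun k => T_back hx ha (hu k)).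
have tk : forall k, (t k <= kbar x n k)%N by move=> k; case: (Ht k).
have [w [hw hFw]] : exists w, (forall k, (w k <= t k)%N) /\
    (forall j, Fs r (cycperm (xbar x n) a (kbar x n)) w j = 0).
  apply: (descent zS) => // j.
  rewrite -(hFu j); apply: F_le => k.
  case: (Ht k) => tk' Tu le.
  rewrite -(T1 _ hx (ha k) tk').
  case: (eqVneq k j) => [e|kj].
    by move: tk' Tu le; rewrite e => tk' Tu le; rewrite (T_val hx (ha j) tk').
  apply: (in_S_mono yS kj Tu (hu k)).
have := Hmin w (fun k => leq_trans (hw k) (tk k)) hFw i.
have := hw i; have := tk i => h1 h2 h3.
have ti : t i = kbar x n i by lia.
case: (Ht i) => _ + _; rewrite ti (Tm_k hx (ha i)) //.
Qed.

Local Close Scope ring_scope.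
Unset Implicit Arguments.


Theorem lemma4p7 (d : nat) (hd : (2 <= d)%N) (r : 'I_d -> nat)
  (hr : exists j, (0 < r j)%N)
  (x : mtfamily d) (len : 'I_d -> nat) :
  in_Sr r x len ->
  ngood r x len = ngood r (xbar x len) (kbar x len).
Proof.
move=> hx.
pose f (a : {dffun forall i : 'I_d, 'I_(kbar x len i)}) : {dffun forall i : 'I_d, 'I_(len i)} :=
  @finfun _ (fun i => 'I_(len i)) (fun i => Ordinal (tau_lt hx (ltn_ord (a i)))).
have fE : forall a, (fun i => nat_of_ord (f a i)) = qa x len (fun i => a i).
  by move=> a; apply: functional_extensionality => i; rewrite /f ffunE.
have finj : injective f.
  move=> a a' e; apply/ffunP => i; apply/val_inj => /=.
  have : nat_of_ord (f a i) = nat_of_ord (f a' i) by rewrite e.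
  rewrite /f !ffunE /=; apply: (tau_inj hx); apply: ltnW; exact: ltn_ord.
rewrite /ngood -(card_image finj); apply: eq_card => q; rewrite inE /=.
apply/idP/imageP.
  move=> hs.
  have [a [ha hq]] := good_tau hx (fun i => ltn_ord (q i)) hs.
  pose a' : {dffun forall i : 'I_d, 'I_(kbar x len i)} :=
    @finfun _ (fun i => 'I_(kbar x len i)) (fun i => Ordinal (ha i)).
  have a'E : (fun i => nat_of_ord (a' i)) = a.
    by apply: functional_extensionality => i; rewrite /a' ffunE.
  exists a'.
    rewrite inE /= a'E; apply/(good_equiv hx ha).
    have -> : qa x len a = (fun i => nat_of_ord (q i)).
      by apply: functional_extensionality => i; rewrite /qa hq.
    exact: hs.
  apply/ffunP => i; apply/val_inj; rewrite /f ffunE /= hq /a' ffunE //.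
move=> [a]; rewrite inE /= => hz ->.
rewrite fE; apply/(good_equiv hx (fun i => ltn_ord (a i))); exact: hz.
Qed.
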